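(* Let $K$ be a field of characteristic zero, $x=(x_1,\dots,x_n)$, $y=(y_1,\dots,y_n)$, let $F\in K[x]^n$ be a polynomial map and $f\in K[x]$. Set $G:=\nabla_{x,y}\big(f+y^{\mathsf T}F\big)\in K[x,y]^{2n}$. Then $\det\mathcal{J}_{x,y}G=(-1)^n(\det\mathcal{J}F)^2$, and $F$ is invertible if and only if $G$ is invertible. Furthermore, if $F$ is a Keller map, then $$\mu_1G_1+\mu_2G_2+\cdots+\mu_{2n}G_{2n}+\mu_{2n+1}$$ is irreducible for all $\mu\in K^{2n+1}$ such that $\mu_i\neq 0$ for some $i\le n$.
   Context: $\nabla_{x,y}$ is the gradient (column vector of partial derivatives) with respect to $x_1,\dots,x_n,y_1,\dots,y_n$; $y^{\mathsf T}F=\sum_j y_jF_j$. $\mathcal{J}$ denotes the Jacobian matrix. A Keller map is a polynomial map $F\in K[x]^n$ with $\det\mathcal{J}F\in K^{*}$. *)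

(* Defs.v *)
From HB Require Import structures.
From mathcomp Require Import all_boot all_order all_algebra.
From mathcomp Require Import mpoly.
Set Implicit Arguments. Unset Strict Implicit. Unset Printing Implicit Defensive.
Import GRing.Theory.
Local Open Scope ring_scope.

Definition ptuple (K : fieldType) (m k : nat) (F : 'I_m -> {mpoly K[k]})
  : m.-tuple {mpoly K[k]} := [tuple F i | i < m].

Definition pcomp (K : fieldType) (m : nat) (F H : 'I_m -> {mpoly K[m]})
  : 'I_m -> {mpoly K[m]} := fun i => F i \mPo ptuple H.

Definition pinvertible (K : fieldType) (m : nat) (F : 'I_m -> {mpoly K[m]}) :=
  exists H : 'I_m -> {mpoly K[m]},
    (forall i, pcomp F H i = 'X_i) /\ (forall i, pcomp H F i = 'X_i).

Definition jacobian (K : fieldType) (m : nat) (F : 'I_m -> {mpoly K[m]})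
  : 'M[{mpoly K[m]}]_m := \matrix_(i, j) (F i)^`M(j).

Definition keller (K : fieldType) (m : nat) (F : 'I_m -> {mpoly K[m]}) :=
  exists c : K, c != 0 /\ \det (jacobian F) = c%:MP.

Definition mirreducible (K : fieldType) (k : nat) (p : {mpoly K[k]}) :=
  p != 0 /\ p \isn't a GRing.unit /\
  forall q r : {mpoly K[k]}, p = q * r -> q \is a GRing.unit \/ r \is a GRing.unit.

Definition xvar (K : fieldType) (n : nat) (i : 'I_n) : {mpoly K[n + n]} :=
  'X_(lshift n i).
Definition yvar (K : fieldType) (n : nat) (i : 'I_n) : {mpoly K[n + n]} :=
  'X_(rshift n i).

Definition incx (K : fieldType) (n : nat) (p : {mpoly K[n]}) : {mpoly K[n + n]} :=
  p \mPo ptuple (@xvar K n).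

Definition gradG (K : fieldType) (n : nat) (f : {mpoly K[n]})
  (F : 'I_n -> {mpoly K[n]}) : 'I_(n + n) -> {mpoly K[n + n]} :=
  fun k => (incx f + \sum_(j < n) yvar K j * incx (F j))^`M(k).

(* Main.v *)
Require Import Defs.
From HB Require Import structures.
From mathcomp Require Import all_boot all_order all_algebra.
From mathcomp Require Import mpoly.
Import GRing.Theory.
Local Open Scope ring_scope.

Section Gen.
Variable K : fieldType.

Lemma mpoly_indP (n : nat) (P : {mpoly K[n]} -> Prop) :
  (forall c, P c%:MP) -> (forall i, P 'X_i) ->
  (forall p q, P p -> P q -> P (p + q)) ->
  (forall p q, P p -> P q -> P (p * q)) -> forall p, P p.
Proof.
move=> PC PX PD PM p; rewrite [p]mpolyE.
apply: (big_ind P); [by rewrite -mpolyC0| exact: PD|].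
move=> m Hm; rewrite -mul_mpolyC; apply: (PM) => //.
rewrite mpolyXE_id; apply: (big_ind P); [by rewrite -mpolyC1| exact: PM|].
move=> i Hi; elim: (m i) => [|k IH]; first by rewrite expr0 -mpolyC1.
by rewrite exprS; apply: PM.
Qed.

Lemma cD (m k : nat) (t : m.-tuple {mpoly K[k]}) (p q : {mpoly K[m]}) :
  (p + q) \mPo t = (p \mPo t) + (q \mPo t).
Proof. exact: raddfD. Qed.
Lemma cB (m k : nat) (t : m.-tuple {mpoly K[k]}) (p q : {mpoly K[m]}) :
  (p - q) \mPo t = (p \mPo t) - (q \mPo t).
Proof. exact: raddfB. Qed.
Lemma cN (m k : nat) (t : m.-tuple {mpoly K[k]}) (p : {mpoly K[m]}) :
  (- p) \mPo t = - (p \mPo t).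
Proof. exact: raddfN. Qed.
Lemma cM (m k : nat) (t : m.-tuple {mpoly K[k]}) (p q : {mpoly K[m]}) :
  (p * q) \mPo t = (p \mPo t) * (q \mPo t).
Proof. exact: rmorphM. Qed.
Lemma cS (m k : nat) (t : m.-tuple {mpoly K[k]}) (I : finType) (G : I -> {mpoly K[m]}) :
  (\sum_i G i) \mPo t = \sum_i (G i \mPo t).
Proof. exact: raddf_sum. Qed.
Lemma cNat (m k : nat) (t : m.-tuple {mpoly K[k]}) j :
  (j%:R : {mpoly K[m]}) \mPo t = j%:R.
Proof. exact: rmorph_nat. Qed.

Lemma tnth_ptuple (m k : nat) (F : 'I_m -> {mpoly K[k]}) i :
  tnth (ptuple F) i = F i.
Proof. by rewrite /ptuple tnth_mktuple. Qed.

Lemma compX (m k : nat) (F : 'I_m -> {mpoly K[k]}) i :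
  'X_i \mPo ptuple F = F i.
Proof. by rewrite comp_mpolyXU -tnth_nth tnth_ptuple. Qed.

Lemma comp_ext (m k : nat) (F G : 'I_m -> {mpoly K[k]}) p :
  (forall i, F i = G i) -> p \mPo ptuple F = p \mPo ptuple G.
Proof.
by move=> e; congr (_ \mPo _); apply: eq_from_tnth => i; rewrite !tnth_ptuple.
Qed.

Lemma compA (m k l : nat) (p : {mpoly K[m]}) (F : 'I_m -> {mpoly K[k]})
    (H : 'I_k -> {mpoly K[l]}) :
  (p \mPo ptuple F) \mPo ptuple H = p \mPo ptuple (fun i => F i \mPo ptuple H).
Proof.
elim/mpoly_indP: p.
- by move=> c; rewrite !comp_mpolyC.
- by move=> i; rewrite !compX.
- by move=> p q IHp IHq; rewrite !cD IHp IHq.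
- by move=> p q IHp IHq; rewrite !cM IHp IHq.
Qed.

Lemma comp_id (m : nat) (p : {mpoly K[m]}) : p \mPo ptuple (fun i => 'X_i) = p.
Proof. exact: comp_mpoly_id. Qed.

Lemma mderivXU (m : nat) (i j : 'I_m) :
  ('X_i : {mpoly K[m]})^`M(j) = (i == j)%:R.
Proof.
rewrite mderivX mnm1E; case: eqP => [->|_].
  have -> : (U_(j) - U_(j))%MM = 0%MM by apply/mnmP => l; rewrite mnmBE subnn mnm0E.
  by rewrite mpolyX0 scale1r.
by rewrite scale0r.
Qed.

Lemma sum_delta {R : nzRingType} {m : nat} (G : 'I_m -> R) j :
  \sum_i G i * (i == j)%:R = G j.
Proof.
rewrite (bigD1 j) //= eqxx mulr1 big1 ?addr0 // => i /negbTE ->.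
by rewrite mulr0.
Qed.

Lemma chain (m k : nat) (p : {mpoly K[m]}) (F : 'I_m -> {mpoly K[k]}) j :
  (p \mPo ptuple F)^`M(j) =
  \sum_i ((p^`M(i)) \mPo ptuple F) * (F i)^`M(j).
Proof.
elim/mpoly_indP: p.
- move=> c; rewrite comp_mpolyC mderivC big1 // => i _.
  by rewrite mderivC comp_mpoly0 mul0r.
- move=> i0; rewrite compX.
  rewrite (bigD1 i0) //= mderivXU eqxx comp_mpoly1 mul1r big1 ?addr0 //.
  by move=> i /negbTE ne; rewrite mderivXU eq_sym ne comp_mpoly0 mul0r.
- move=> p q IHp IHq; rewrite cD mderivD IHp IHq -big_split /=.
  by apply: eq_bigr => i _; rewrite mderivD cD mulrDl.
- move=> p q IHp IHq; rewrite cM mderivM IHp IHq.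
  rewrite mulr_suml mulr_sumr -big_split /=.
  apply: eq_bigr => i _; rewrite mderivM cD !cM.
  by rewrite mulrDl; congr (_ + _); rewrite -!mulrA; congr (_ * _); rewrite mulrC.
Qed.

End Gen.

Section Grad.
Variable K : fieldType.
Variable n : nat.
Implicit Types (p : {mpoly K[n]}).

Lemma incx_comp (l : nat) p (P : 'I_(n + n) -> {mpoly K[l]}) :
  incx p \mPo ptuple P = p \mPo ptuple (fun i => P (lshift n i)).
Proof. by rewrite /incx compA; apply: comp_ext => i; rewrite /xvar compX. Qed.

Lemma yvar_comp (l : nat) j (P : 'I_(n + n) -> {mpoly K[l]}) :
  yvar K j \mPo ptuple P = P (rshift n j).
Proof. by rewrite /yvar compX. Qed.

Lemma xvar_comp (l : nat) j (P : 'I_(n + n) -> {mpoly K[l]}) :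
  xvar K j \mPo ptuple P = P (lshift n j).
Proof. by rewrite /xvar compX. Qed.

Lemma incxD p q : incx (p + q) = incx p + incx q.
Proof. exact: cD. Qed.
Lemma incxM p q : incx (p * q) = incx p * incx q.
Proof. exact: cM. Qed.
Lemma incxZ c p : incx (c *: p) = c *: incx p.
Proof. exact: comp_mpolyZ. Qed.
Lemma incxC c : incx (c%:MP : {mpoly K[n]}) = c%:MP.
Proof. exact: comp_mpolyC. Qed.
Lemma incxS (I : finType) (G : I -> {mpoly K[n]}) :
  incx (\sum_i G i) = \sum_i incx (G i).
Proof. exact: cS. Qed.

Lemma dincx_l p i : (incx p)^`M(lshift n i) = incx (p^`M(i)).
Proof.
rewrite -[RHS](sum_delta (fun j => incx (p^`M(j)))) /incx chain; apply: eq_bigr => j _.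
by rewrite /xvar mderivXU (inj_eq (@lshift_inj _ _)).
Qed.

Lemma dincx_r p i : (incx p)^`M(rshift n i) = 0.
Proof.
rewrite /incx chain big1 // => j _.
by rewrite /xvar mderivXU eq_lrshift mulr0.
Qed.

Lemma dyvar_l j i : (yvar K j)^`M(lshift n i) = 0.
Proof. by rewrite /yvar mderivXU eq_rlshift. Qed.

Lemma dyvar_r j i : (yvar K j)^`M(rshift n i) = (j == i)%:R.
Proof. by rewrite /yvar mderivXU (inj_eq (@rshift_inj _ _)). Qed.

Variables (f : {mpoly K[n]}) (F : 'I_n -> {mpoly K[n]}).

Lemma gradG_l i : gradG f F (lshift n i) =
  incx (f^`M(i)) + \sum_j yvar K j * incx ((F j)^`M(i)).
Proof.
rewrite /gradG mderivD dincx_l; congr (_ + _).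
rewrite raddf_sum /=. 
by apply: eq_bigr => j _; rewrite mderivM dyvar_l mul0r add0r dincx_l.
Qed.

Lemma gradG_r i : gradG f F (rshift n i) = incx (F i).
Proof.
rewrite /gradG mderivD dincx_r add0r.
rewrite raddf_sum /= -[RHS](sum_delta (fun j => incx (F j))).
apply: eq_bigr => j _; rewrite mderivM dyvar_r dincx_r mulr0 addr0 mulrC.
by [].
Qed.

End Grad.

Section Jac.
Variable K : fieldType.

Lemma jac_comp (m : nat) (F H : 'I_m -> {mpoly K[m]}) :
  jacobian (Defs.pcomp F H) = map_mx (comp_mpoly (ptuple H)) (jacobian F) *m jacobian H.
Proof.
apply/matrixP => i j; rewrite !mxE /Defs.pcomp chain; apply: eq_bigr => k _.
by rewrite !mxE.
Qed.

Lemma jac_id (m : nat) : jacobian (fun i => 'X_i : {mpoly K[m]}) = 1%:M.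
Proof. by apply/matrixP => i j; rewrite !mxE mderivXU. Qed.

Lemma jac_unit (m : nat) (F H : 'I_m -> {mpoly K[m]}) :
  (forall i, Defs.pcomp F H i = 'X_i) -> \det (jacobian H) \is a GRing.unit.
Proof.
move=> e; have : jacobian (Defs.pcomp F H) = 1%:M.
  by rewrite -(jac_id m); apply/matrixP => i j; rewrite !mxE e.
rewrite jac_comp => /(congr1 determinant); rewrite det_mulmx det_map_mx det1.
by move=> e1; apply/unitrPr; exists (comp_mpoly (ptuple H) (\det (jacobian F))); rewrite mulrC.
Qed.

Lemma det_anti (R : comPzRingType) (n : nat) (A B C : 'M[R]_n) :
  \det (block_mx A B C 0) = (-1) ^+ n * \det B * \det C.
Proof.
have e : block_mx A B C 0 *m
   (block_mx 1%:M 0 (-1%:M) 1%:M *m block_mx 1%:M 1%:M 0 1%:M *m block_mx 1%:M 0 (-1%:M) 1%:M)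
   = block_mx (- B) A 0 C.
  rewrite !mulmx_block !(mul1mx, mulmx1, mul0mx, mulmx0, mulNmx, mulmxN).
  by rewrite !(addr0, add0r, subr0, subrr, addNr, mulmx0, mulmx1, mulmxN, opprK).
move: (congr1 determinant e); rewrite !det_mulmx !det_lblock !det_ublock !det1 !mulr1.
by move=> ->; rewrite -scaleN1r detZ.
Qed.

End Jac.

Section Part1.
Variable K : fieldType.
Variable n : nat.
Variables (f : {mpoly K[n]}) (F : 'I_n -> {mpoly K[n]}).

Local Notation ix := (comp_mpoly (ptuple (@xvar K n))).

Lemma jac_G : jacobian (gradG f F) =
  block_mx (\matrix_(i, j) (gradG f F (lshift n i))^`M(lshift n j))
           (map_mx ix (jacobian F)^T) (map_mx ix (jacobian F)) 0.
Proof.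
apply/matrixP => k l; rewrite -(splitK k) -(splitK l).
case: (split k) => i; case: (split l) => j /=.
- by rewrite block_mxEul !mxE.
- rewrite block_mxEur !mxE gradG_l mderivD dincx_r add0r raddf_sum /=.
  rewrite -[RHS](sum_delta (fun k0 => incx ((F k0)^`M(i)))).
  apply: eq_bigr => k0 _; rewrite mderivM dyvar_r dincx_r mulr0 addr0 mulrC.
  by [].
- by rewrite block_mxEdl !mxE gradG_r dincx_l.
- by rewrite block_mxEdr !mxE gradG_r dincx_r.
Qed.

Lemma det_G : \det (jacobian (gradG f F)) =
  (-1) ^+ n * incx (\det (jacobian F)) ^+ 2.
Proof.
by rewrite jac_G det_anti !det_map_mx det_tr expr2 mulrA.
Qed.

End Part1.

Lemma split_l (m : nat) (i : 'I_m) : split (lshift m i) = inl i.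
Proof. exact: (unsplitK (inl i)). Qed.
Lemma split_r (m : nat) (i : 'I_m) : split (rshift m i) = inr i.
Proof. exact: (unsplitK (inr i)). Qed.

Section Inv.
Variable K : fieldType.
Variable n : nat.

Definition PX (k : 'I_(n + n)) : {mpoly K[n]} :=
  match split k with inl i => 'X_i | inr _ => 0 end.

Lemma incx_proj (p : {mpoly K[n]}) : incx p \mPo ptuple PX = p.
Proof.
rewrite incx_comp -[RHS]comp_id; apply: comp_ext => i.
by rewrite /PX split_l.
Qed.

Lemma incx_inj (p : {mpoly K[n]}) : incx p = 0 -> p = 0.
Proof. by move=> e; rewrite -(incx_proj p) e comp_mpoly0. Qed.

Lemma incx_unit (p : {mpoly K[n]}) :
  incx p \is a GRing.unit -> p \is a GRing.unit.
Proof.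
move=> u; rewrite -(incx_proj p).
exact: (rmorph_unit (comp_mpoly (ptuple PX)) u).
Qed.

Variables (f : {mpoly K[n]}) (F : 'I_n -> {mpoly K[n]}).
Local Notation G := (gradG f F).
Local Notation J := (jacobian F).

Lemma sumJ (Y : 'cV[{mpoly K[n]}]_n) i :
  \sum_j Y j 0 * (F j)^`M(i) = (J^T *m Y) i 0.
Proof. by rewrite mxE; apply: eq_bigr => j _; rewrite !mxE mulrC. Qed.

Lemma inv_from_G : pinvertible G -> pinvertible F.
Proof.
case=> Phi [hGP hPG].
have uJ : \det J \is a GRing.unit.
  have := @jac_unit K _ Phi G hPG; rewrite det_G unitrM => /andP[_].
  by rewrite expr2 unitrM => /andP[/incx_unit].
have uJT : J^T \in unitmx by rewrite unitmxE det_tr.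
pose Yv := - (invmx J^T *m \col_j f^`M(j)).
pose S (k : 'I_(n + n)) : {mpoly K[n]} :=
  match split k with inl i => 'X_i | inr i => Yv i 0 end.
pose T (k : 'I_(n + n)) : {mpoly K[n]} :=
  match split k with inl _ => 0 | inr i => 'X_i end.
have incxS_ p : incx p \mPo ptuple S = p.
  rewrite incx_comp -[RHS]comp_id; apply: comp_ext => i.
  by rewrite /S split_l.
have GSl i : G (lshift n i) \mPo ptuple S = 0.
  rewrite gradG_l cD incxS_ cS.
  under eq_bigr => j _ do rewrite cM incxS_ yvar_comp /S split_r.
  rewrite sumJ /Yv mulmxN mulmxA mulmxV // mul1mx mxE mxE.
  by rewrite subrr.
have GSr i : G (rshift n i) \mPo ptuple S = F i by rewrite gradG_r incxS_.
exists (fun i => Phi (lshift n i) \mPo ptuple T); split => i.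
- have := hGP (rshift n i); rewrite /Defs.pcomp gradG_r incx_comp.
  move/(congr1 (comp_mpoly (ptuple T))); rewrite compA compX /T split_r.
  by move=> <-.
- have := hPG (lshift n i); rewrite /Defs.pcomp.
  move/(congr1 (comp_mpoly (ptuple S))); rewrite compA compX /S split_l.
  move=> <-; rewrite /Defs.pcomp compA; apply: comp_ext => k.
  rewrite -(splitK k); case: (split k) => j /=.
  + by rewrite GSl /T split_l comp_mpoly0.
  + by rewrite GSr /T split_r compX.
Qed.

End Inv.

Section Inv2.
Variable K : fieldType.
Variable n : nat.
Variables (f : {mpoly K[n]}) (F : 'I_n -> {mpoly K[n]}).
Local Notation G := (gradG f F).
Local Notation J := (jacobian F).

Lemma inv_to_G : pinvertible F -> pinvertible G.
Proof.
case=> H [hFH hHF].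
have uJ : \det J \is a GRing.unit := @jac_unit K _ H F hHF.
have uJT : J^T \in unitmx by rewrite unitmxE det_tr.
pose N := invmx J^T.
have JN : J^T *m N = 1%:M by rewrite mulmxV.
have NJ : N *m J^T = 1%:M by rewrite mulVmx.
pose Hb (i : 'I_n) : {mpoly K[n + n]} := H i \mPo ptuple (@yvar K n).
pose rho := comp_mpoly (ptuple Hb).
pose v : 'cV[{mpoly K[n + n]}]_n := \col_l ('X_(lshift n l) - rho (f^`M(l))).
pose Phi (k : 'I_(n + n)) : {mpoly K[n + n]} :=
  match split k with inl i => Hb i | inr i => (map_mx rho N *m v) i 0 end.
have Phil i : Phi (lshift n i) = Hb i by rewrite /Phi split_l.
have Phir i : Phi (rshift n i) = (map_mx rho N *m v) i 0 by rewrite /Phi split_r.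
have incxPhi p : incx p \mPo ptuple Phi = rho p.
  by rewrite incx_comp; apply: comp_ext => i; rewrite Phil.
have HbG i : Hb i \mPo ptuple G = xvar K i.
  rewrite compA.
  rewrite (@comp_ext K n (n + n) _ (fun j => F j \mPo ptuple (@xvar K n)) (H i));
    last by move=> j; rewrite yvar_comp gradG_r.
  by rewrite -compA; move: (hHF i); rewrite /Defs.pcomp => ->; rewrite compX.
have rhoG p : rho p \mPo ptuple G = incx p.
  by rewrite /rho (@compA K _ _ _ p Hb G); apply: comp_ext => i; rewrite HbG.
exists Phi; split => k; rewrite /Defs.pcomp -(splitK k); case: (split k) => i /=.
- rewrite gradG_l cD incxPhi cS.
  have -> : \sum_j (yvar K j * incx ((F j)^`M(i)) \mPo ptuple Phi) =
      ((map_mx rho J^T) *m (map_mx rho N *m v)) i 0.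
    rewrite mxE; apply: eq_bigr => j _.
    by rewrite cM yvar_comp incxPhi Phir !mxE mulrC.
  rewrite mulmxA -map_mxM JN map_mx1 mul1mx mxE.
  by rewrite addrC subrK.
- rewrite gradG_r incxPhi /rho.
  have e := hFH i; rewrite /Defs.pcomp in e.
  have := congr1 (comp_mpoly (ptuple (@yvar K n))) e; rewrite compA compX.
  by move=> e'; exact: e'.
- rewrite Phil; exact: HbG.
- rewrite Phir mxE cS.
  under eq_bigr => j _ do rewrite cM !mxE cB rhoG rhoG compX gradG_l addrC addKr mulr_sumr.
  rewrite exchange_big /=.
  rewrite -[RHS](sum_delta (fun l => yvar K l)).
  apply: eq_bigr => l _.
  have -> : (l == i)%:R = incx ((N *m J^T) i l).
    by rewrite NJ mxE eq_sym /incx cNat.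
  rewrite mxE incxS mulr_sumr; apply: eq_bigr => j _.
  by rewrite incxM !mxE mulrCA.
Qed.

End Inv2.

Lemma coef1_lin (R : nzRingType) (b c : R) : (b%:P * 'X + c%:P)`_1 = b.
Proof. by rewrite coefD coefMX !coefC /= addr0. Qed.

Lemma sz2 (a b : nat) : (0 < a)%N -> (0 < b)%N -> (a + b).-1 = 2%N -> a = 1%N \/ b = 1%N.
Proof.
case: a => [//|[|a]] _; first by left.
case: b => [//|[|b]] _; first by right.
by move=> /eqP; rewrite !addSn !addnS.
Qed.

Section Irr.
Variable K : fieldType.
Variable n : nat.
Local Notation RR := {mpoly K[n + n]}.

Definition cst : {rmorphism K -> {poly RR}} := (polyC \o (@mpolyC (n + n) K))%FUN.

Definition hpsi (k : 'I_(n + n)) : {poly RR} :=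
  match split k with inl _ => ('X_k)%:P | inr _ => ('X_k)%:P * 'X end.

Definition psi (p : RR) : {poly RR} := mmap cst hpsi p.

Lemma psiC c : psi c%:MP = (c%:MP)%:P.
Proof. by rewrite /psi mmapC. Qed.
Lemma psiX k : psi 'X_k = hpsi k.
Proof. by rewrite /psi mmapX mmap1U. Qed.
Lemma psiD p q : psi (p + q) = psi p + psi q.
Proof. exact: raddfD. Qed.
Lemma psiM p q : psi (p * q) = psi p * psi q.
Proof. exact: rmorphM. Qed.
Lemma psiS (I : finType) (G : I -> RR) : psi (\sum_i G i) = \sum_i psi (G i).
Proof. exact: raddf_sum. Qed.

Lemma psi1 p : (psi p).[1] = p.
Proof.
elim/(@mpoly_indP K): p.
- by move=> c; rewrite psiC hornerC.
- move=> k; rewrite psiX /hpsi; case: (split k) => _.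
  + by rewrite hornerC.
  + by rewrite hornerMX hornerC mulr1.
- move=> p q IHp IHq; rewrite psiD hornerD; congr (_ + _); [exact: IHp | exact: IHq].
- move=> p q IHp IHq; rewrite psiM hornerM; congr (_ * _); [exact: IHp | exact: IHq].
Qed.

Definition P0 (k : 'I_(n + n)) : RR :=
  match split k with inl _ => 'X_k | inr _ => 0 end.

Lemma psi0 p : (psi p).[0] = p \mPo ptuple P0.
Proof.
elim/(@mpoly_indP K): p.
- by move=> c; rewrite psiC hornerC comp_mpolyC.
- move=> k; rewrite psiX compX /hpsi /P0; case: (split k) => _.
  + by rewrite hornerC.
  + by rewrite hornerMX mulr0.
- move=> p q IHp IHq; rewrite psiD hornerD cD; congr (_ + _); [exact: IHp | exact: IHq].
- move=> p q IHp IHq; rewrite psiM hornerM cM; congr (_ * _); [exact: IHp | exact: IHq].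
Qed.

Lemma psi_incx (p : {mpoly K[n]}) : psi (incx p) = (incx p)%:P.
Proof.
elim/(@mpoly_indP K): p.
- by move=> c; rewrite incxC psiC.
- by move=> i; rewrite /incx compX /xvar psiX /hpsi split_l.
- by move=> p q IHp IHq; rewrite incxD psiD IHp IHq polyCD.
- by move=> p q IHp IHq; rewrite incxM psiM IHp IHq polyCM.
Qed.

Lemma psi_yvar j : psi (yvar K j) = (yvar K j)%:P * 'X.
Proof. by rewrite /yvar psiX /hpsi split_r. Qed.

Definition Sg (j : 'I_n) (k : 'I_(n + n)) : RR :=
  match split k with inl i => 'X_(lshift n i) | inr l => (l == j)%:R end.

Lemma incx_Sg j (p : {mpoly K[n]}) : incx p \mPo ptuple (Sg j) = incx p.
Proof.
rewrite incx_comp /incx; apply: comp_ext => i.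
by rewrite /Sg split_l.
Qed.

Lemma P0_Sg j (q : RR) : (q \mPo ptuple P0) \mPo ptuple (Sg j) = q \mPo ptuple P0.
Proof.
rewrite compA; apply: comp_ext => k; rewrite -(splitK k).
case: (split k) => i /=; rewrite /P0 ?split_l ?split_r.
- by rewrite compX /Sg split_l.
- by rewrite comp_mpoly0.
Qed.

Lemma irr_lin (a0 : {mpoly K[n]}) (c e : 'I_n -> {mpoly K[n]}) (ka : K) :
  ka != 0 -> \sum_j e j * c j = ka%:MP ->
  mirreducible (incx a0 + \sum_j yvar K j * incx (c j)).
Proof.
move=> nzk hsum.
set b := \sum_j yvar K j * incx (c j).
have bSg j : b \mPo ptuple (Sg j) = incx (c j).
  rewrite /b cS -[RHS](sum_delta (fun l => incx (c l))).
  apply: eq_bigr => l _; rewrite cM yvar_comp incx_Sg /Sg split_r mulrC.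
  by [].
have [j0 cj0] : exists j, c j != 0.
  apply/existsP; apply: contraT; rewrite negb_exists => /forallP allz.
  move: hsum; rewrite big1 => [/esym/eqP|j _]; first by rewrite mpolyC_eq0 (negbTE nzk).
  by have /negPn/eqP -> := allz j; rewrite mulr0.
have bnz : b != 0.
  apply: contraNneq cj0 => b0; apply/eqP/incx_inj.
  by rewrite -(bSg j0) b0 comp_mpoly0.
set p := incx a0 + b.
have psip : psi p = b%:P * 'X + (incx a0)%:P.
  rewrite psiD psi_incx addrC /b psiS; congr (_ + _).
  rewrite rmorph_sum mulr_suml; apply: eq_bigr => j _.
  by rewrite psiM psi_yvar psi_incx mulrAC -polyCM.
have szp : size (psi p) = 2%N.
  by rewrite psip size_MXaddC polyC_eq0 (negbTE bnz) /= size_polyC bnz.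
have coef1 : (psi p)`_1 = b.
  by rewrite psip coef1_lin.
have psi0E : psi 0 = 0 by rewrite /psi raddf0.
have pnz : p != 0.
  by apply/eqP => p0; move: szp; rewrite p0 psi0E size_poly0.
have key : forall q r, p = q * r -> size (psi q) = 1%N -> q \is a GRing.unit.
  move=> q r pqr szq.
  have e1 := size1_polyC (eq_leq szq).
  have c0 : (psi q)`_0 = q.
    by have := psi1 q; rewrite {1}e1 hornerC.
  have psiq : psi q = q%:P by rewrite {1}e1 c0.
  have hq0 : q = q \mPo ptuple P0.
    by have := psi0 q; rewrite psiq hornerC.
  set s := (psi r)`_1.
  have bqs : b = q * s by rewrite -coef1 pqr psiM psiq coefCM.
  have cj j : incx (c j) = q * (s \mPo ptuple (Sg j)).
    by rewrite -bSg bqs cM {1}hq0 P0_Sg -hq0.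
  have : ka%:MP = q * (\sum_j incx (e j) * (s \mPo ptuple (Sg j))).
    rewrite -(@incxC K n ka) -hsum incxS mulr_sumr; apply: eq_bigr => j _.
    by rewrite incxM cj mulrCA.
  move=> hk; apply/unitrPr; exists ((\sum_j incx (e j) * (s \mPo ptuple (Sg j))) * ka^-1%:MP).
  by rewrite mulrA -hk -mpolyCM divff.
split; first exact: pnz.
split.
  apply/negP => /(rmorph_unit (psi : {rmorphism RR -> {poly RR}})).
  by rewrite poly_unitE szp.
move=> q r pqr.
have qnz : q != 0 by apply: contraNneq pnz => q0; rewrite pqr q0 mul0r.
have rnz : r != 0 by apply: contraNneq pnz => r0; rewrite pqr r0 mulr0.
have psiqnz : psi q != 0.
  apply: contraNneq pnz => h; have := psi1 p; rewrite pqr psiM h mul0r horner0.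
  by move=> <-.
have psirnz : psi r != 0.
  apply: contraNneq pnz => h; have := psi1 p; rewrite pqr psiM h mulr0 horner0.
  by move=> <-.
have := szp; rewrite pqr psiM (size_mul psiqnz psirnz).
have sq : (0 < size (psi q))%N by rewrite size_poly_gt0.
have sr : (0 < size (psi r))%N by rewrite size_poly_gt0.
move=> h.
have [hq|hr] : size (psi q) = 1%N \/ size (psi r) = 1%N.
  exact: sz2 sq sr h.
- by left; apply: (key q r pqr hq).
- by right; apply: (key r q) hr; rewrite pqr mulrC.
Qed.

End Irr.

Section Final.
Variable K : fieldType.
Variable n : nat.
Variables (f : {mpoly K[n]}) (F : 'I_n -> {mpoly K[n]}).
Local Notation G := (gradG f F).
Local Notation J := (jacobian F).

Lemma lin_form (mu : 'I_(n + n) -> K) (mu0 : K) :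
  \sum_(k < n + n) mu k *: G k + mu0%:MP =
  incx (\sum_i mu (lshift n i) *: f^`M(i) + \sum_i mu (rshift n i) *: F i + mu0%:MP)
  + \sum_j yvar K j * incx (\sum_i mu (lshift n i) *: (F j)^`M(i)).
Proof.
rewrite big_split_ord /=.
have -> : \sum_i mu (rshift n i) *: G (rshift n i) = \sum_i mu (rshift n i) *: incx (F i).
  by apply: eq_bigr => i _; rewrite gradG_r.
have -> : \sum_i mu (lshift n i) *: G (lshift n i) = \sum_i mu (lshift n i) *: incx f^`M(i)
    + \sum_i \sum_j yvar K j * incx (mu (lshift n i) *: (F j)^`M(i)).
  rewrite -big_split; apply: eq_bigr => i _.
  rewrite gradG_l scalerDr; congr (_ + _); rewrite [LHS]scaler_sumr; apply: eq_bigr => j _.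
  by rewrite incxZ scalerAr.
have -> : \sum_j yvar K j * incx (\sum_i mu (lshift n i) *: (F j)^`M(i)) =
    \sum_i \sum_j yvar K j * incx (mu (lshift n i) *: (F j)^`M(i)).
  rewrite exchange_big; apply: eq_bigr => j _.
  by rewrite incxS mulr_sumr.
rewrite !incxD !incxS incxC.
have -> : \sum_i incx (mu (lshift n i) *: f^`M(i)) = \sum_i mu (lshift n i) *: incx f^`M(i).
  by apply: eq_bigr => i _; rewrite incxZ.
have -> : \sum_i incx (mu (rshift n i) *: F i) = \sum_i mu (rshift n i) *: incx (F i).
  by apply: eq_bigr => i _; rewrite incxZ.
set A := \sum_i _ *: incx _^`M(_).
set B := \sum_i \sum_j _.
set C := \sum_i mu (rshift n i) *: incx (F i).
by rewrite -!addrA; congr (_ + _); rewrite addrC -!addrA; congr (_ + _); rewrite addrC.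
Qed.

End Final.

Theorem lemma7p5 (K : fieldType) (n : nat) (charK : [pchar K] =i pred0)
    (F : 'I_n -> {mpoly K[n]}) (f : {mpoly K[n]}) :
  [/\ \det (jacobian (gradG f F)) = (-1) ^+ n * incx (\det (jacobian F)) ^+ 2,
      pinvertible F <-> pinvertible (gradG f F)
    & keller F ->
      forall (mu : 'I_(n + n) -> K) (mu0 : K),
        (exists i : 'I_n, mu (lshift n i) != 0) ->
        mirreducible (\sum_(k < n + n) mu k *: gradG f F k + mu0%:MP)].
Proof.
split.
- exact: det_G.
- split; [exact: inv_to_G | exact: inv_from_G].
- case=> ka [nzka hdet] mu mu0 [i0 hi0].
  rewrite lin_form.
  apply: (@irr_lin K n _ _ (fun j => \adj (jacobian F) i0 j) (ka * mu (lshift n i0))).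
    exact: mulf_neq0.
  pose mv : 'cV[{mpoly K[n]}]_n := \col_i (mu (lshift n i))%:MP.
  have cE j : \sum_i mu (lshift n i) *: (F j)^`M(i) = (jacobian F *m mv) j 0.
    rewrite mxE; apply: eq_bigr => i _.
    by rewrite !mxE mulrC mul_mpolyC.
  under eq_bigr => j _ do rewrite cE.
  have -> : \sum_j \adj (jacobian F) i0 j * (jacobian F *m mv) j 0 =
      (\adj (jacobian F) *m (jacobian F *m mv)) i0 0.
    by rewrite [RHS]mxE.
  rewrite mulmxA mul_adj_mx hdet mul_scalar_mx mxE mxE.
  by rewrite mul_mpolyC mpolyCM mul_mpolyC.
Qed.
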